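(* Every real algebraic number of degree $2$ is the limit value $\lim_{\lambda\to0}v_\lambda$ of some $2\times2$ absorbing game whose data $g,q,w$ are all rational. *)

(* Defs.v *)
From HB Require Import structures.
From mathcomp Require Import all_boot all_order all_algebra.
From mathcomp Require Import all_classical all_reals all_analysis.
Set Implicit Arguments. Unset Strict Implicit. Unset Printing Implicit Defensive.
Import Order.TTheory GRing.Theory Num.Theory.
Local Open Scope ring_scope.

Definition algebraic_of_degree (R : realType) (a : R) (n : nat) : Prop :=
  exists p : {poly rat},
    [/\ p \is monic, irreducible_poly p, size p = n.+1 & root (map_poly ratr p) a].

Definition mixed (R : realType) (m : nat) (x : 'I_m -> R) : Prop :=
  (forall i, 0 <= x i) /\ \sum_(i < m) x i = 1.

Definition payoff (R : realType) (m n : nat) (A : 'I_m -> 'I_n -> R)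
  (x : 'I_m -> R) (y : 'I_n -> R) : R :=
  \sum_(i < m) \sum_(j < n) x i * y j * A i j.

Definition is_game_value (R : realType) (m n : nat) (A : 'I_m -> 'I_n -> R) (v : R)
  : Prop :=
  (exists x, mixed x /\ forall y, mixed y -> v <= payoff A x y) /\
  (exists y, mixed y /\ forall x, mixed x -> payoff A x y <= v).

(* An absorbing game with action sets 'I_m and 'I_n: non-absorbing payoff g,
   absorption probability q (in [0,1]) and absorbing payoff w. *)
Record absorbing_game (m n : nat) := AbsGame {
  ag_g : 'I_m -> 'I_n -> rat;
  ag_q : 'I_m -> 'I_n -> rat;
  ag_w : 'I_m -> 'I_n -> rat }.

Definition absorbing_game_wf m n (G : absorbing_game m n) : Prop :=
  forall i j, 0 <= ag_q G i j <= 1.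

(* Shapley operator matrix at discount lambda and continuation value v:
   stage payoff g(i,j) weighted by lambda; with probability q(i,j) play is
   absorbed with payoff w(i,j) forever, otherwise the game restarts. *)
Definition shapley_matrix (R : realType) m n (G : absorbing_game m n)
  (lam v : R) : 'I_m -> 'I_n -> R :=
  fun i j => lam * ratr (ag_g G i j) +
    (1 - lam) * (ratr (ag_q G i j) * ratr (ag_w G i j)
                 + (1 - ratr (ag_q G i j)) * v).

Definition is_discounted_value (R : realType) m n (G : absorbing_game m n)
  (lam v : R) : Prop :=
  is_game_value (shapley_matrix G lam v) v.

(* Main.v *)
Require Import Defs.
From HB Require Import structures.
From mathcomp Require Import all_boot all_order all_algebra.
From mathcomp Require Import all_classical all_reals all_analysis.
From mathcomp Require Import ring lra.
Import Order.TTheory GRing.Theory Num.Theory numFieldNormedType.Exports.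
Local Open Scope classical_set_scope.
Local Open Scope ring_scope.

Section Aux.
Variable R : realType.

Definition i0 : 'I_2 := ord0.
Definition i1 : 'I_2 := ord_max.

Lemma sum2 (F : 'I_2 -> R) : \sum_(i < 2) F i = F i0 + F i1.
Proof.
rewrite !big_ord_recl big_ord0 addr0; congr (_ + F _).
exact: val_inj.
Qed.

Lemma ord2P (i : 'I_2) : i = i0 \/ i = i1.
Proof.
case: i => [[|[|k]] Hk]; [left|right|by []]; exact: val_inj.
Qed.

Lemma payoff_colv (A : 'I_2 -> 'I_2 -> R) x y v :
  (forall j, \sum_(i < 2) x i * A i j = v) -> \sum_(j < 2) y j = 1 ->
  payoff A x y = v.
Proof.
move=> Hj Hy; rewrite /payoff exchange_big /=.
transitivity (\sum_(j < 2) y j * v); last by rewrite -mulr_suml Hy mul1r.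
apply: eq_bigr => j _; rewrite -(Hj j) mulr_sumr; apply: eq_bigr => i _.
by rewrite mulrA (mulrC (y j)).
Qed.

Lemma payoff_rowv (A : 'I_2 -> 'I_2 -> R) x y v :
  (forall i, \sum_(j < 2) y j * A i j = v) -> \sum_(i < 2) x i = 1 ->
  payoff A x y = v.
Proof.
move=> Hi Hx; rewrite /payoff.
transitivity (\sum_(i < 2) x i * v); last by rewrite -mulr_suml Hx mul1r.
apply: eq_bigr => i _; rewrite -(Hi i) mulr_sumr; apply: eq_bigr => j _.
by rewrite mulrA.
Qed.

Lemma payoff_subc (A : 'I_2 -> 'I_2 -> R) x y c : mixed x -> mixed y ->
  payoff A x y - c = payoff (fun i j => A i j - c) x y.
Proof.
move=> [_ Hx] [_ Hy]; rewrite /payoff.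
have E : forall i, \sum_(j < 2) x i * y j * c = x i * c.
  by move=> i; rewrite -mulr_suml -mulr_sumr Hy mulr1.
have Ec : c = \sum_(i < 2) \sum_(j < 2) x i * y j * c.
  by rewrite (eq_bigr _ (fun i _ => E i)) -mulr_suml Hx mul1r.
rewrite {1}Ec -sumrB; apply: eq_bigr => i _; rewrite -sumrB; apply: eq_bigr => j _.
by rewrite mulrBr.
Qed.

Lemma payoff_le (A B : 'I_2 -> 'I_2 -> R) x y : mixed x -> mixed y ->
  (forall i j, A i j <= B i j) -> payoff A x y <= payoff B x y.
Proof.
move=> [Hx _] [Hy _] H; rewrite /payoff; apply: ler_sum => i _; apply: ler_sum => j _.
by apply: ler_wpM2l => //; apply: mulr_ge0.
Qed.

End Aux.


Definition Wm (U L : rat) : 'I_2 -> 'I_2 -> rat := fun i j => if i == j then U else L.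
Definition Qm (qC qD : rat) : 'I_2 -> 'I_2 -> rat :=
  fun i j => if i == i0 then 0 else if j == i0 then qC else qD.
Definition Gm U L qC qD : absorbing_game 2 2 := AbsGame (Wm U L) (Qm qC qD) (Wm U L).

Lemma W00 U L : Wm U L i0 i0 = U. Proof. by []. Qed.
Lemma W01 U L : Wm U L i0 i1 = L. Proof. by []. Qed.
Lemma W10 U L : Wm U L i1 i0 = L. Proof. by []. Qed.
Lemma W11 U L : Wm U L i1 i1 = U. Proof. by []. Qed.
Lemma Q0j qC qD j : Qm qC qD i0 j = 0. Proof. by []. Qed.
Lemma Q10 qC qD : Qm qC qD i1 i0 = qC. Proof. by []. Qed.
Lemma Q11 qC qD : Qm qC qD i1 i1 = qD. Proof. by []. Qed.

Lemma Gm_wf U L qC qD : 0 <= qC <= 1 -> 0 <= qD <= 1 -> absorbing_game_wf (Gm U L qC qD).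
Proof.
move=> HC HD i j /=; rewrite /Qm; case: (i == i0) => //; case: (j == i0) => //.
Qed.

Section G.
Variable R : realType.
Variables (U L qC qD : rat).
Hypotheses (HC : 0 <= qC <= 1) (HD : 0 <= qD <= 1).
Let G := Gm U L qC qD.

Definition kap (lam : R) i j := lam + (1 - lam) * ratr (Qm qC qD i j).

Lemma shapE (lam v : R) i j :
  shapley_matrix G lam v i j = v + kap lam i j * (ratr (Wm U L i j) - v).
Proof. rewrite /shapley_matrix /kap /=; ring. Qed.

Lemma kap_ge (lam : R) i j : 0 < lam <= 1 -> lam <= kap lam i j.
Proof.
move=> /andP[l0 l1]; rewrite /kap lerDl; apply: mulr_ge0; first by rewrite subr_ge0.
rewrite ler0q /Qm; case: (i == i0) => //; case: (j == i0).
  by case/andP: HC. by case/andP: HD.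
Qed.

Lemma uniq_aux (lam v1 v2 : R) : 0 < lam <= 1 -> v1 < v2 ->
  is_discounted_value G lam v1 -> is_discounted_value G lam v2 -> False.
Proof.
move=> Hl H12 [_ [y1 [my1 Hy1]]] [[x2 [mx2 Hx2]] _].
have A := Hx2 y1 my1. have B := Hy1 x2 mx2.
have C : payoff (shapley_matrix G lam v2) x2 y1 - v2 <=
         (payoff (shapley_matrix G lam v1) x2 y1 - v1) - lam * (v2 - v1).
  rewrite !payoff_subc //; apply: payoff_le => // i j.
  rewrite !shapE.
  have K := kap_ge lam i j Hl.
  nra.
case/andP: Hl => l0 _.
nra.
Qed.

Lemma uniq_val (lam v1 v2 : R) : 0 < lam <= 1 ->
  is_discounted_value G lam v1 -> is_discounted_value G lam v2 -> v1 = v2.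
Proof.
move=> Hl H1 H2; case: (ltgtP v1 v2) => // H.
- by case: (@uniq_aux lam v1 v2 Hl H H1 H2).
- by case: (@uniq_aux lam v2 v1 Hl H H2 H1).
Qed.


Lemma kap0 (lam : R) j : kap lam i0 j = lam.
Proof. by rewrite /kap Q0j rmorph0 mulr0 addr0. Qed.

Lemma fixed_of_key (lam v : R) : 0 < lam <= 1 -> ratr L < v < ratr U ->
  kap lam i1 i1 * (ratr U - v) ^+ 2 = kap lam i1 i0 * (v - ratr L) ^+ 2 ->
  is_discounted_value G lam v.
Proof.
move=> Hl /andP[vL vU] Key.
have KC := kap_ge lam i1 i0 Hl. have KD := kap_ge lam i1 i1 Hl.
case/andP: (Hl) => l0 l1.
have Uv : ratr U - v != 0 by rewrite subr_eq0 gt_eqF.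
have vL0 : v - ratr L != 0 by rewrite subr_eq0 gt_eqF.
have UL : (ratr U : R) - ratr L != 0 by rewrite subr_eq0 gt_eqF // (lt_trans vL vU).
have Key' : kap lam i1 i1 = kap lam i1 i0 * (v - ratr L) ^+ 2 / (ratr U - v) ^+ 2.
  by rewrite -Key mulfK // expf_neq0.
have den0 : 0 < kap lam i1 i0 * (v - ratr L) + lam * (ratr U - v).
  apply: ltr_wpDl; first by apply: mulr_ge0; [lra|lra].
  by apply: mulr_gt0; lra.
have den : kap lam i1 i0 * (v - ratr L) + lam * (ratr U - v) != 0 by rewrite gt_eqF.
pose x := fun i : 'I_2 => if i == i0
  then kap lam i1 i0 * (v - ratr L) / (kap lam i1 i0 * (v - ratr L) + lam * (ratr U - v))
  else lam * (ratr U - v) / (kap lam i1 i0 * (v - ratr L) + lam * (ratr U - v)).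
pose y := fun j : 'I_2 => if j == i0
  then (v - ratr L) / (ratr U - ratr L) else (ratr U - v) / (ratr U - ratr L).
have mx : mixed x.
  split; last by rewrite sum2 /x /=; field.
  move=> i; case: (ord2P i) => -> /=; apply: divr_ge0; try lra.
  by apply: mulr_ge0; lra.
  by apply: mulr_ge0; lra.
have my : mixed y.
  split; last by rewrite sum2 /y /=; field.
  by move=> i; case: (ord2P i) => -> /=; apply: divr_ge0; lra.
split.
- exists x; split => // y' [_ Hy'].
  rewrite (@payoff_colv _ _ _ _ v) // => j.
  rewrite sum2 !shapE !kap0 /x /=.
  case: (ord2P j) => -> /=.
  + by field; rewrite ?Uv ?den ?UL ?vL0.
  + rewrite Key'; by field; rewrite ?Uv ?den ?UL ?vL0.
- exists y; split => // x' [_ Hx'].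
  rewrite (@payoff_rowv _ _ _ _ v) // => i.
  rewrite sum2 !shapE /y /=.
  case: (ord2P i) => -> /=.
  + rewrite !kap0; by field; rewrite ?Uv ?den ?UL ?vL0.
  + rewrite Key'; by field; rewrite ?Uv ?den ?UL ?vL0.
Qed.

Definition vf (lam : R) :=
  (Num.sqrt (kap lam i1 i1) * ratr U + Num.sqrt (kap lam i1 i0) * ratr L) /
  (Num.sqrt (kap lam i1 i1) + Num.sqrt (kap lam i1 i0)).

Lemma fixed_exists (lam : R) : 0 < lam <= 1 -> (ratr L : R) < ratr U ->
  is_discounted_value G lam (vf lam).
Proof.
move=> Hl LU.
have KC := kap_ge lam i1 i0 Hl. have KD := kap_ge lam i1 i1 Hl.
case/andP: (Hl) => l0 l1.
have sC : 0 < Num.sqrt (kap lam i1 i0) by rewrite sqrtr_gt0; lra.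
have sD : 0 < Num.sqrt (kap lam i1 i1) by rewrite sqrtr_gt0; lra.
have s0 : Num.sqrt (kap lam i1 i1) + Num.sqrt (kap lam i1 i0) != 0.
  by rewrite gt_eqF // addr_gt0.
have E1 : vf lam - ratr L = Num.sqrt (kap lam i1 i1) * (ratr U - ratr L) /
  (Num.sqrt (kap lam i1 i1) + Num.sqrt (kap lam i1 i0)) by rewrite /vf; field.
have E2 : ratr U - vf lam = Num.sqrt (kap lam i1 i0) * (ratr U - ratr L) /
  (Num.sqrt (kap lam i1 i1) + Num.sqrt (kap lam i1 i0)) by rewrite /vf; field.
apply: fixed_of_key => //.
- apply/andP; split; rewrite -subr_gt0 ?E1 ?E2; apply: divr_gt0; try apply: mulr_gt0;
   try lra; exact: addr_gt0.
- rewrite E1 E2.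
  have eC : kap lam i1 i0 = Num.sqrt (kap lam i1 i0) ^+ 2 by rewrite sqr_sqrtr //; lra.
  have eD : kap lam i1 i1 = Num.sqrt (kap lam i1 i1) ^+ 2 by rewrite sqr_sqrtr //; lra.
  move: s0 eC eD.
  set sc := Num.sqrt (kap lam i1 i0); set sd := Num.sqrt (kap lam i1 i1) => s0 -> ->.
  by field.
Qed.

Lemma kap_cvg i j : kap x i j @[x --> (0 : R)] --> kap 0 i j.
Proof.
rewrite /kap; apply: cvgD; first exact: cvg_id.
apply: cvgMr_tmp; apply: cvgB; [exact: cvg_cst|exact: cvg_id].
Qed.

Lemma sq_cvg i j : Num.sqrt (kap x i j) @[x --> (0 : R)] --> Num.sqrt (kap 0 i j).
Proof.
apply: (@continuous_cvg _ _ _ _ _ (fun x => kap x i j) Num.sqrt); last exact: kap_cvg.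
exact: sqrt_continuous.
Qed.

Lemma vf_cvg : Num.sqrt (kap 0 i1 i1) + Num.sqrt (kap 0 i1 i0) != 0 ->
  vf x @[x --> (0 : R)^'+] --> vf 0.
Proof.
move=> nz; apply: cvg_at_right_filter; rewrite /vf.
apply: cvgM.
  apply: cvgD; apply: cvgMr_tmp; exact: sq_cvg.
apply: cvgV => //.
apply: cvgD; exact: sq_cvg.
Qed.

Lemma game_main (a : R) : (ratr L : R) < ratr U ->
  Num.sqrt (kap 0 i1 i1) + Num.sqrt (kap 0 i1 i0) != 0 -> vf 0 = a ->
  absorbing_game_wf G /\
    (forall lam : R, 0 < lam <= 1 -> exists v : R, is_discounted_value G lam v) /\
    (forall vl : R -> R,
       (forall lam : R, 0 < lam <= 1 -> is_discounted_value G lam (vl lam)) ->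
       vl lam @[lam --> 0^'+] --> a).
Proof.
move=> LU nz Ha; split; first exact: Gm_wf.
split; first by move=> lam Hl; exists (vf lam); exact: fixed_exists.
move=> vl Hvl; rewrite -Ha; apply: cvg_trans (vf_cvg nz).
apply: near_eq_cvg; near=> lam.
have Hl : 0 < lam <= 1.
  apply/andP; split; first by near: lam; exact: nbhs_right_gt.
  apply/ltW; near: lam; apply: nbhs_right_lt; exact: ltr01.
apply: (@uniq_val lam) => //; [exact: fixed_exists | exact: Hvl].
Unshelve. all: by end_near.
Qed.

End G.


Lemma root2 (R : realType) (p : {poly rat}) (a : R) : p \is monic -> size p = 3%N ->
  root (map_poly ratr p) a -> a ^+ 2 + ratr p`_1 * a + ratr p`_0 = 0.
Proof.
move=> mp sp /rootP; rewrite horner_coef size_map_poly sp.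
rewrite !big_ord_recr big_ord0 /= !coef_map.
have : lead_coef p = 1 by apply/monicP.
rewrite lead_coefE sp /= => ->.
rewrite rmorph1 expr0 expr1 mulr1 mul1r add0r => H.
by rewrite -H; ring.
Qed.

Theorem mainTheorem8 (R : realType) (a : R) :
  algebraic_of_degree a 2 ->
  exists G : absorbing_game 2 2,
    absorbing_game_wf G /\
    (forall lam : R, 0 < lam <= 1 -> exists v : R, is_discounted_value G lam v) /\
    (forall vl : R -> R,
       (forall lam : R, 0 < lam <= 1 -> is_discounted_value G lam (vl lam)) ->
       vl lam @[lam --> 0^'+] --> a).
Proof.
move=> [p [mp _ sp rp]].
have H := @root2 R p a mp sp rp.
move: H; set b := p`_1; set c := p`_0 => H.
pose m : rat := - b / 2. pose D : rat := m ^+ 2 - c. pose u : rat := D + 1.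
pose q : rat := D / u ^+ 2.
have rm : ratr m = - ratr b / 2 :> R by rewrite /m fmorph_div rmorphN (rmorph_nat _ 2).
have rD : ratr D = ratr m ^+ 2 - ratr c :> R by rewrite /D rmorphB rmorphXn.
have ru : ratr u = ratr D + 1 :> R by rewrite /u rmorphD rmorph1.
have rq : ratr q = ratr D / ratr u ^+ 2 :> R by rewrite /q fmorph_div rmorphXn.
have key : (a - ratr m) ^+ 2 = ratr D :> R.
  have : (a - ratr m) ^+ 2 - ratr D = a ^+ 2 + ratr b * a + ratr c by rewrite rD rm; field.
  by rewrite H => /eqP; rewrite subr_eq0 => /eqP.
have D0 : 0 <= D by rewrite -(ler0q R) -key sqr_ge0.
have u0 : 0 < u by rewrite /u; lra.
have ru0 : 0 < ratr u :> R by rewrite ltr0q.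
have q01 : 0 <= q <= 1.
  apply/andP; split; first by rewrite /q divr_ge0 // exprn_ge0 // ltW.
  by rewrite /q ler_pdivrMr ?exprn_gt0 // mul1r /u; nra.
have Du : D / u < u by rewrite ltr_pdivrMr // /u; nra.
clearbody q u D m.
have l01 : 0 <= (1 : rat) <= 1 by rewrite ler01 lexx.
case: (lerP (ratr m) a) => Ham.
- exists (Gm (m + u) (m + D / u) 1 q).
  have sq : Num.sqrt (ratr q) = (a - ratr m) / ratr u :> R.
    rewrite rq -key -expr_div_n sqrtr_sqr ger0_norm // divr_ge0 // ?subr_ge0 // ltW //.
  apply: (@game_main R _ _ _ _ l01 q01).
  + by rewrite ltr_rat ltrD2l.
  + rewrite /kap Q11 Q10 subr0 mul1r !add0r rmorph1 mulr1 sqrtr1.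
    by rewrite gt_eqF // ltr_wpDl // sqrtr_ge0.
  + rewrite /vf /kap Q11 Q10 subr0 mul1r !add0r rmorph1 mulr1 sqrtr1 sq.
    have eU : ratr (m + u) = ratr m + ratr u :> R by rewrite rmorphD.
    have eL : ratr (m + D / u) = ratr m + ratr D / ratr u :> R by rewrite rmorphD fmorph_div.
    rewrite /Wm /= eU eL ru -key.
    field.
    by apply/andP; split; apply/negbT/gt_eqF; nra.
- exists (Gm (m - D / u) (m - u) q 1).
  have sq : Num.sqrt (ratr q) = (ratr m - a) / ratr u :> R.
    rewrite rq -key -sqrrN opprB -expr_div_n sqrtr_sqr ger0_norm //.
    by rewrite divr_ge0 // ?subr_ge0 // ltW.
  apply: (@game_main R _ _ _ _ q01 l01).
  + by rewrite ltr_rat ltrD2l ltrN2.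
  + rewrite /kap Q11 Q10 subr0 !mul1r !add0r rmorph1 sqrtr1.
    by rewrite gt_eqF // ltr_wpDr // sqrtr_ge0.
  + rewrite /vf /kap Q11 Q10 subr0 !mul1r !add0r rmorph1 sqrtr1 sq.
    have eU : ratr (m - D / u) = ratr m - ratr D / ratr u :> R by rewrite rmorphB fmorph_div.
    have eL : ratr (m - u) = ratr m - ratr u :> R by rewrite rmorphB.
    rewrite /Wm /= eU eL ru -key.
    field.
    by apply/andP; split; apply/negbT/gt_eqF; nra.
Qed.
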